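(* For every sequent $\Gamma\Rightarrow\Delta$ of the logic $\mathtt{TPDL}$: if $\Gamma\Rightarrow\Delta$ is provable in the sequent calculus $\mathtt{GTPDL}$, then $M\models\Gamma\Rightarrow\Delta$ for every model $M$ (i.e. $\Gamma\Rightarrow\Delta$ is valid).
   Context: Fix sets $\mathsf{Prop}$ of propositional variables and $\mathsf{AtProg}$ of atomic programs. Formulas and programs of $\mathtt{TPDL}$ are defined by mutual induction: $\varphi ::= \bot \mid p \mid (\varphi\to\varphi) \mid [\pi]\varphi \mid [\pi]^{\leftarrow}\varphi$ and $\pi ::= \alpha \mid \pi;\pi \mid \pi\cup\pi \mid \pi^{*} \mid \varphi?$, where $p\in\mathsf{Prop}$, $\alpha\in\mathsf{AtProg}$ ($[\pi]^{\leftarrow}$ is the backwards box). Abbreviations: $\neg\varphi:=\varphi\to\bot$, $\langle\pi\rangle\varphi:=\neg[\pi]\neg\varphi$, $\langle\pi\rangle^{\leftarrow}\varphi:=\neg[\pi]^{\leftarrow}\neg\varphi$; for a set $\Gamma$ of formulas, $[\pi]\Gamma=\{[\pi]\varphi:\varphi\in\Gamma\}$ and $[\pi]^{\leftarrow}\Gamma=\{[\pi]^{\leftarrow}\varphi:\varphi\in\Gamma\}$. A model is $M=(W,(R_\alpha)_{\alpha\in\mathsf{AtProg}},V)$ with $W$ a nonempty set of states, $R_\alpha\subseteq W\times W$, $V:W\to\mathcal P(\mathsf{Prop})$. Relations $R_\pi$: $R_{\pi_0;\pi_1}$ is the composition ($w R v$ iff $wR_{\pi_0}u R_{\pi_1}v$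 for some $u$), $R_{\pi_0\cup\pi_1}=R_{\pi_0}\cup R_{\pi_1}$, $R_{\pi^*}$ is the reflexive–transitive closure of $R_\pi$, $R_{\psi?}=\{(w,w):M,w\models\psi\}$. Satisfaction: $M,w\not\models\bot$; $M,w\models p$ iff $p\in V(w)$; $\to$ classical; $M,w\models[\pi]\varphi$ iff $M,v\models\varphi$ for all $v$ with $wR_\pi v$; $M,w\models[\pi]^{\leftarrow}\varphi$ iff $M,v\models\varphi$ for all $v$ with $vR_\pi w$. A sequent $\Gamma\Rightarrow\Delta$ is a pair of finite sets of formulas (commas denote union). $M,w\models\Gamma\Rightarrow\Delta$ means: if $M,w\models\varphi$ for all $\varphi\in\Gamma$ then $M,w\models\psi$ for some $\psi\in\Delta$; $M\models\Gamma\Rightarrow\Delta$ means this holds at every state; valid means $M\models\Gamma\Rightarrow\Delta$ for every model $M$. $\mathtt{GTPDL}$ rules (premises / conclusion): (Ax) no premise, conclusion $\Gamma\Rightarrow\Delta$ with $\Gamma\cap\Delta\neq\emptyset$; ($\bot$) no premise, conclusion $\Gamma,\bot\Rightarrow\Delta$; ($\to$L) $\Gamma\Rightarrow\varphi,\Delta$ and $\Gamma,\psi\Rightarrow\Delta$ / $\Gamma,\varphi\to\psi\Rightarrow\Delta$; ($\to$R) $\Gamma,\varphi\Rightarrow\psi,\Delta$ / $\Gamma\Rightarrow\varphi\to\psi,\Delta$; (Wk) $\Gamma\Rightarrow\Delta$ / $\Gamma'\Rightarrow\Delta'$ with $\Gamma\subseteq\Gamma'$, $\Delta\subseteq\Delta'$;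 (Cut) $\Gamma\Rightarrow\varphi,\Delta$ and $\Gamma,\varphi\Rightarrow\Delta$ / $\Gamma\Rightarrow\Delta$; ($[\,]$) $\Gamma\Rightarrow\varphi,[\pi]^{\leftarrow}\Delta$ / $[\pi]\Gamma\Rightarrow[\pi]\varphi,\Delta$; ($[\,]^{\leftarrow}$) $\Gamma\Rightarrow\varphi,[\pi]\Delta$ / $[\pi]^{\leftarrow}\Gamma\Rightarrow[\pi]^{\leftarrow}\varphi,\Delta$; ($[;]$L) $\Gamma,[\pi_0][\pi_1]\varphi\Rightarrow\Delta$ / $\Gamma,[\pi_0;\pi_1]\varphi\Rightarrow\Delta$; ($[;]$R) $\Gamma\Rightarrow[\pi_0][\pi_1]\varphi,\Delta$ / $\Gamma\Rightarrow[\pi_0;\pi_1]\varphi,\Delta$; ($[\cup]$L) $\Gamma,[\pi_0]\varphi,[\pi_1]\varphi\Rightarrow\Delta$ / $\Gamma,[\pi_0\cup\pi_1]\varphi\Rightarrow\Delta$; ($[\cup]$R) $\Gamma\Rightarrow\Delta,[\pi_0]\varphi$ and $\Gamma\Rightarrow\Delta,[\pi_1]\varphi$ / $\Gamma\Rightarrow[\pi_0\cup\pi_1]\varphi,\Delta$; ($[*]$L) $\Gamma,\varphi,[\pi][\pi^*]\varphi\Rightarrow\Delta$ / $\Gamma,[\pi^*]\varphi\Rightarrow\Delta$; ($[*]$R) $\Gamma,\varphi\Rightarrow[\pi]\varphi$ / $[\pi^*]\Gamma,\varphi\Rightarrow[\pi^*]\varphi$; ($[?]$L) $\Gamma\Rightarrow\varphi,\Delta$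 and $\Gamma,\psi\Rightarrow\Delta$ / $\Gamma,[\varphi?]\psi\Rightarrow\Delta$; ($[?]$R) $\Gamma,\varphi\Rightarrow\psi,\Delta$ / $\Gamma\Rightarrow[\varphi?]\psi,\Delta$. A $\mathtt{GTPDL}$ proof of a sequent is a finite tree of sequents with that sequent at the root, each node being the conclusion of an instance of a rule whose premises are its children (so every leaf is an instance of Ax or $\bot$); a sequent is provable in $\mathtt{GTPDL}$ if it has such a proof. *)

(* Defs.v *)
From Stdlib Require Import List Relations.
Import ListNotations.
Set Implicit Arguments.

Section TPDL.
Variables (Prop_ AtProg : Type).

Inductive form : Type :=
| Bot : form
| Var : Prop_ -> form
| Imp : form -> form -> form
| Box : prog -> form -> form
| BBox : prog -> form -> form
with prog : Type :=
| Atom : AtProg -> prog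
| Seq : prog -> prog -> prog
| Choice : prog -> prog -> prog
| Star : prog -> prog
| Test : form -> prog.

Record model : Type := Model {
  W : Type;
  W_nonempty : inhabited W;
  R : AtProg -> W -> W -> Prop;
  V : W -> Prop_ -> Prop
}.

Fixpoint sat (M : model) (w : W M) (phi : form) {struct phi} : Prop :=
  match phi with
  | Bot => False
  | Var p => V M w p
  | Imp a b => sat M w a -> sat M w b
  | Box pi a => forall v, rel M pi w v -> sat M v a
  | BBox pi a => forall v, rel M pi v w -> sat M v a
  end
with rel (M : model) (pi : prog) {struct pi} : W M -> W M -> Prop :=
  match pi with
  | Atom al => R M al
  | Seq p q => fun w v => exists u, rel M p w u /\ rel M q u v
  | Choice p q => fun w v => rel M p w v \/ rel M q w v
  | Star p => clos_refl_trans (W M) (rel M p)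
  | Test a => fun w v => w = v /\ sat M w a
  end.

(* A sequent is a pair of finite sets of formulas, represented by lists
   (only membership matters). *)
Definition sat_seq (M : model) (w : W M) (G D : list form) : Prop :=
  (forall phi, In phi G -> sat M w phi) -> exists psi, In psi D /\ sat M w psi.

Definition model_sat_seq (M : model) (G D : list form) : Prop :=
  forall w : W M, sat_seq M w G D.

Definition valid (G D : list form) : Prop :=
  forall M : model, model_sat_seq M G D.

Inductive provable : list form -> list form -> Prop :=
| r_Ax : forall G D phi, In phi G -> In phi D -> provable G D
| r_Bot : forall G D, provable (Bot :: G) D
| r_ImpL : forall G D a b,
    provable G (a :: D) -> provable (b :: G) D -> provable (Imp a b :: G) D
| r_ImpR : forall G D a b,
    provable (a :: G) (b :: D) -> provable G (Imp a b :: D)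
| r_Wk : forall G D G' D',
    provable G D -> incl G G' -> incl D D' -> provable G' D'
| r_Cut : forall G D a,
    provable G (a :: D) -> provable (a :: G) D -> provable G D
| r_Box : forall G D pi a,
    provable G (a :: map (BBox pi) D) ->
    provable (map (Box pi) G) (Box pi a :: D)
| r_BBox : forall G D pi a,
    provable G (a :: map (Box pi) D) ->
    provable (map (BBox pi) G) (BBox pi a :: D)
| r_SeqL : forall G D p q a,
    provable (Box p (Box q a) :: G) D -> provable (Box (Seq p q) a :: G) D
| r_SeqR : forall G D p q a,
    provable G (Box p (Box q a) :: D) -> provable G (Box (Seq p q) a :: D)
| r_ChoiceL : forall G D p q a,
    provable (Box p a :: Box q a :: G) D -> provable (Box (Choice p q) a :: G) D
| r_ChoiceR : forall G D p q a,
    provable G (Box p a :: D) -> provable G (Box q a :: D) ->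
    provable G (Box (Choice p q) a :: D)
| r_StarL : forall G D p a,
    provable (a :: Box p (Box (Star p) a) :: G) D ->
    provable (Box (Star p) a :: G) D
| r_StarR : forall G p a,
    provable (a :: G) [Box p a] ->
    provable (a :: map (Box (Star p)) G) [Box (Star p) a]
| r_TestL : forall G D a b,
    provable G (a :: D) -> provable (b :: G) D ->
    provable (Box (Test a) b :: G) D
| r_TestR : forall G D a b,
    provable (a :: G) (b :: D) -> provable G (Box (Test a) b :: D).

End TPDL.

(* Main.v *)
Require Import Defs.
From Stdlib Require Import List Relations Classical.
Import ListNotations.

Theorem mainTheorem1 (Prop_ AtProg : Type) (G D : list (form Prop_ AtProg)) :
  provable G D -> forall M : model Prop_ AtProg, model_sat_seq M G D.
Proof.
  induction 1; intros M w HG; simpl in *.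
  - exists phi; auto.
  - exfalso; apply (HG (Bot _ _)); auto.
  - destruct (IHprovable1 M w) as [psi [Hin Hs]].
    + intros; apply HG; auto.
    + destruct Hin as [<-|Hin].
      * destruct (IHprovable2 M w) as [psi [Hin' Hs']].
        -- intros phi [<-|Hp]. apply (HG (Imp a b)); auto. apply HG; auto.
        -- exists psi; auto.
      * exists psi; auto.
  - destruct (classic (exists psi, In psi D /\ sat M w psi)) as [[psi [? ?]]|Hn].
    + exists psi; auto.
    + exists (Imp a b); split; [left; auto|]. simpl. intro Ha.
      destruct (IHprovable M w) as [psi [[<-|Hin] Hs]]; auto.
      * intros phi [<-|Hp]; auto.
      * exfalso; apply Hn; eauto.
  - destruct (IHprovable M w) as [psi [Hin Hs]].
    + intros phi Hp; apply HG; auto.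
    + exists psi; auto.
  - destruct (IHprovable1 M w) as [psi [[<-|Hin] Hs]]; auto.
    + destruct (IHprovable2 M w) as [psi' [Hin Hs']]; eauto.
      intros phi [<-|Hp]; auto.
    + eauto.
  - destruct (classic (exists psi, In psi D /\ sat M w psi)) as [[psi [? ?]]|Hn].
    + exists psi; auto.
    + exists (Box pi a); split; [left; auto|]. simpl. intros v Hv.
      destruct (IHprovable M v) as [psi [[<-|Hin] Hs]]; auto.
      * intros phi Hp. apply (HG (Box pi phi)); [apply in_map; auto| exact Hv].
      * apply in_map_iff in Hin. destruct Hin as [d [<- Hd]].
        exfalso; apply Hn. exists d; split; auto.
  - destruct (classic (exists psi, In psi D /\ sat M w psi)) as [[psi [? ?]]|Hn].
    + exists psi; auto.
    + exists (BBox pi a); split; [left; auto|]. simpl. intros v Hv.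
      destruct (IHprovable M v) as [psi [[<-|Hin] Hs]]; auto.
      * intros phi Hp. apply (HG (BBox pi phi)); [apply in_map; auto| exact Hv].
      * apply in_map_iff in Hin. destruct Hin as [d [<- Hd]].
        exfalso; apply Hn. exists d; split; auto.
  - destruct (IHprovable M w) as [psi [Hin Hs]]; [|exists psi; auto].
    intros phi [<-|Hp].
    + simpl; intros u Hu v Hv. apply (HG (Box (Seq p q) a)); [left; auto|]. simpl; eauto.
    + apply HG; auto.
  - destruct (IHprovable M w) as [psi [[<-|Hin] Hs]]; auto.
    + exists (Box (Seq p q) a); split; [left; auto|].
      simpl in *. intros v [u [Hu Hv]]. eauto.
    + exists psi; auto.
  - destruct (IHprovable M w) as [psi [Hin Hs]]; [|exists psi; auto].
    intros phi [<-|[<-|Hp]].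
    + simpl; intros v Hv. apply (HG (Box (Choice p q) a)); [left; auto|]. simpl; auto.
    + simpl; intros v Hv. apply (HG (Box (Choice p q) a)); [left; auto|]. simpl; auto.
    + apply HG; auto.
  - destruct (IHprovable1 M w) as [psi [[<-|Hin] Hs]]; auto; [|exists psi; auto].
    destruct (IHprovable2 M w) as [psi' [[<-|Hin'] Hs']]; auto; [|exists psi'; auto].
    exists (Box (Choice p q) a); split; [left; auto|].
    simpl in *. intros v [Hv|Hv]; auto.
  - destruct (IHprovable M w) as [psi [Hin Hs]]; [|exists psi; auto].
    intros phi [<-|[<-|Hp]].
    + apply (HG (Box (Star p) a)); [left; auto|]. simpl. apply rt_refl.
    + simpl; intros u Hu v Hv. apply (HG (Box (Star p) a)); [left; auto|]. simpl.
      apply rt_trans with u; auto. apply rt_step; auto.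
    + apply HG; auto.
  - exists (Box (Star p) a); split; [left; auto|]. simpl.
    assert (Hinv : forall x y, clos_refl_trans _ (rel M p) x y ->
      sat M x a /\ (forall g, In g G -> sat M x (Box (Star p) g)) ->
      sat M y a /\ (forall g, In g G -> sat M y (Box (Star p) g))).
    { induction 1; auto. intros [Ha Hg]. split.
      - destruct (IHprovable M x) as [psi [[<-|[]] Hs]].
        + intros phi [<-|Hp]; auto. apply (Hg phi Hp). apply rt_refl.
        + apply Hs; auto.
      - intros g Hgi. simpl. intros v Hv. apply (Hg g Hgi). simpl.
        apply rt_trans with y; auto. apply rt_step; auto. }
    intros v Hv. refine (proj1 (Hinv w v Hv _)). split.
    + apply HG; auto.
    + intros g Hg. apply (HG (Box (Star p) g)). right; apply in_map; auto.
  - destruct (classic (sat M w a)) as [Ha|Ha].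
    + destruct (IHprovable2 M w) as [psi [Hin Hs]]; [|exists psi; auto].
      intros phi [<-|Hp].
      * apply (HG (Box (Test a) b)); [left; auto|]. simpl; auto.
      * apply HG; auto.
    + destruct (IHprovable1 M w) as [psi [[<-|Hin] Hs]]; [| contradiction | exists psi; auto].
      intros; apply HG; auto.
  - destruct (classic (exists psi, In psi D /\ sat M w psi)) as [[psi [? ?]]|Hn].
    + exists psi; auto.
    + exists (Box (Test a) b); split; [left; auto|]. simpl. intros v [<- Ha].
      destruct (IHprovable M w) as [psi [[<-|Hin] Hs]]; auto.
      * intros phi [<-|Hp]; auto.
      * exfalso; eauto.
Qed.
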